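(* Let $(\Theta,D)$ be a matrix scheme. If the projection of preference of consequences in $(\Theta,D)$ is unique, then it coincides with domination on $D$.
   Context: A preference relation on a set $X$ is a binary relation $\prec$ on $X$ that is asymmetric ($x\prec y \Rightarrow$ not $y\prec x$) and negatively transitive (not $x\prec y$ and not $y\prec z$ $\Rightarrow$ not $x\prec z$). A matrix scheme is a pair $(\Theta,D)$ where $\Theta$ is an arbitrary nonempty set and $D$ is a set of real-valued functions on $\Theta$. Domination on $D$ is the relation $\prec$ defined by: $d_1\prec d_2$ iff $d_1(\theta)\le d_2(\theta)$ for all $\theta\in\Theta$ and $d_1(\theta^* )<d_2(\theta^* )$ for some $\theta^*\in\Theta$. A projection of preference of consequences in $(\Theta,D)$ is a preference relation $\prec^P$ on $D$ such that $d_1\prec d_2\Rightarrow d_1\prec^P d_2$ for all $d_1,d_2\in D$, where $\prec$ is domination. *)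

(* Defs.v *)
From Stdlib Require Export Reals.
Open Scope R_scope.

Definition elt {Theta : Type} (D : (Theta -> R) -> Prop) : Type :=
  { d : Theta -> R | D d }.

Definition preference_relation {X : Type} (r : X -> X -> Prop) : Prop :=
  (forall x y, r x y -> ~ r y x) /\
  (forall x y z, ~ r x y -> ~ r y z -> ~ r x z).

Definition dominates {Theta : Type} {D : (Theta -> R) -> Prop}
  (d1 d2 : elt D) : Prop :=
  (forall t : Theta, proj1_sig d1 t <= proj1_sig d2 t) /\
  (exists t : Theta, proj1_sig d1 t < proj1_sig d2 t).

Definition is_projection {Theta : Type} {D : (Theta -> R) -> Prop}
  (P : elt D -> elt D -> Prop) : Prop :=
  preference_relation P /\
  (forall d1 d2 : elt D, dominates d1 d2 -> P d1 d2).

(* Main.v *)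
Require Import Defs.
From Stdlib Require Import Reals Lra Classical FunctionalExtensionality ProofIrrelevance.

Theorem theorem1 (Theta : Type) (HTheta : inhabited Theta)
  (D : (Theta -> R) -> Prop) (P : elt D -> elt D -> Prop) :
  is_projection P ->
  (forall Q : elt D -> elt D -> Prop,
      is_projection Q -> forall d1 d2, Q d1 d2 <-> P d1 d2) ->
  forall d1 d2 : elt D, P d1 d2 <-> dominates d1 d2.
Proof.
  intros [[Hasym Hneg] Hdom] Huniq d1 d2.
  split; [|apply Hdom].
  intros HP.
  destruct (classic (exists t, proj1_sig d2 t < proj1_sig d1 t)) as [[t0 Ht0]|Hno].
  - exfalso.
    set (Q := fun x y : elt D => proj1_sig x t0 < proj1_sig y t0 \/
               (proj1_sig x t0 = proj1_sig y t0 /\ P x y)).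
    assert (HQ : is_projection Q).
    { split; [split|].
      - intros x y [H|[H1 H2]] [H'|[H1' H2']]; try lra.
        eapply Hasym; eauto.
      - intros x y z Hxy Hyz [H|[H1 H2]].
        + apply Hxy. left.
          destruct (Rlt_or_le (proj1_sig x t0) (proj1_sig y t0)) as [E|E]; auto.
          exfalso. apply Hyz. left. lra.
        + assert (Exy : proj1_sig x t0 = proj1_sig y t0 \/ proj1_sig x t0 <> proj1_sig y t0) by apply classic.
          destruct Exy as [Exy|Exy].
          * apply (Hneg x y z); auto.
            -- intro. apply Hxy. right. auto.
            -- intro. apply Hyz. right. split; auto. lra.
          * destruct (Rlt_or_le (proj1_sig x t0) (proj1_sig y t0)) as [E|E].
            -- apply Hxy. left. auto.
            -- apply Hyz. left. lra.
      - intros x y [Hle [t Ht]].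
        destruct (Rle_lt_or_eq_dec _ _ (Hle t0)) as [E|E].
        + left; auto.
        + right; split; auto. apply Hdom. split; eauto. }
    assert (Q d2 d1) by (left; auto).
    apply (Hasym d2 d1); [apply (proj1 (Huniq Q HQ d2 d1)); auto | auto].
  - assert (Hle : forall t, proj1_sig d1 t <= proj1_sig d2 t).
    { intros t. apply Rnot_lt_le. intro. apply Hno. eauto. }
    split; auto.
    apply NNPP. intro Hne.
    exfalso.
    assert (Heq : d1 = d2).
    { destruct d1 as [f1 p1], d2 as [f2 p2]. simpl in *.
      assert (f1 = f2).
      { apply functional_extensionality. intro t.
        destruct (Rle_lt_or_eq_dec _ _ (Hle t)); auto.
        exfalso; apply Hne; eauto. }
      subst. f_equal. apply proof_irrelevance. }
    subst. eapply Hasym; eauto.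
Qed.
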